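(* Let $\mathcal Q=\mathbb R^n$ and let $g_s$ be a one-parameter group of affine transformations acting by $\Phi_{g_s}(q)=A_sq+c_s$ ($A_s\in\mathbb R^{n\times n}$ invertible, $c_s\in\mathbb R^n$, smooth in $s$, $A_0=I$, $c_0=0$), with control action given by $\Psi_{g_s}(q)$ satisfying $\rho(A_sq+c_s)\Psi_{g_s}(q)=A_s\rho(q)$. Put $B=\frac{d}{ds}A_s|_{s=0}$, $d=\frac{d}{ds}c_s|_{s=0}$. (i) (Control-independent case.) If $\tilde L(A_sq+c_s,A_s^{-\top}\lambda,A_sv,A_s^{-\top}v_\lambda)=\tilde L(q,\lambda,v,v_\lambda)$ for all $s$ and all arguments, then for all $\alpha,\gamma\in[0,1]$ the approximate discrete Lagrangian $\tilde L_d$ satisfies $\tilde L_d(\tilde\Phi_{g_s}(y_k),\tilde\Phi_{g_s}(y_{k+1}),h)=\tilde L_d(y_k,y_{k+1},h)$, where $\tilde\Phi_{g_s}(q,\lambda)=(A_sq+c_s,A_s^{-\top}\lambda)$. (ii) (Control-dependent case.) If $\tilde L^{\mathcal E}(A_sq+c_s,A_s^{-\top}\lambda,A_sv,A_s^{-\top}v_\lambda,\Psi_{g_s}(q)u)=\tilde L^{\mathcal E}(q,\lambda,v,v_\lambda,u)$ for all $s$ and all arguments, and either $\Psi_{g_s}(q)=E_s$ is independent of $q$ or $\beta=\gamma$, then $\tilde L^{\mathcal E}_d$ is invariant under $(y_k,y_{k+1},U^{(1)},U^{(2)})\mapsto(\tilde\Phi_{g_s}(y_k),\tilde\Phi_{g_s}(y_{k+1}),\Psi_{g_s}(\bar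 q_k^\beta)U^{(1)},\Psi_{g_s}(\bar q_k^{1-\beta})U^{(2)})$. In either case the quantity $I_d=p_q^\top(Bq+d)-p_\lambda^\top B^\top\lambda$, evaluated at $(y_k,p_{y,k})$ with $p_{y,k}=(p_{q,k},p_{\lambda,k})$ the discrete momenta, is conserved along solutions of the corresponding discrete Euler–Lagrange equations (and, in case (ii), the discrete minimisation conditions $D_{U^{(1)}}\tilde L^{\mathcal E}_{d,k}=D_{U^{(2)}}\tilde L^{\mathcal E}_{d,k}=0$).
   Context: Setting: $\mathcal Q=\mathbb R^n$, $y=(q,\lambda)\in T^*\mathcal Q$, controls in $\mathbb R^m$; smooth $f(q,v)$, injective $\rho(q)\in\mathbb R^{n\times m}$, $\mathrm g(q)$ symmetric positive definite, $b(q)=\rho(q)\mathrm g(q)^{-1}\rho(q)^\top$. $\tilde L^{\mathcal E}(q,\lambda,v,v_\lambda,u)=v_\lambda^\top v+\lambda^\top(f(q,v)+\rho(q)u)-\frac12u^\top\mathrm g(q)u$, $\tilde L(q,\lambda,v,v_\lambda)=v_\lambda^\top v+\lambda^\top f(q,v)+\frac12\lambda^\top b(q)\lambda$. $A^{-\top}$ denotes $(A^{-1})^\top$. Notation: $\bar y_k^\gamma=\gamma y_k+(1-\gamma)y_{k+1}$ (similarly $\bar q_k^\gamma$), $\Delta y_k=(y_{k+1}-y_k)/h$. Low-order discrete Lagrangians with parameters $\alpha,\beta,\gamma\in[0,1]$: $\tilde L_d(y_k,y_{k+1},h)=h\alpha\tilde L(\bar y_k^\gamma,\Delta y_k)+h(1-\alpha)\tilde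 L(\bar y_k^{1-\gamma},\Delta y_k)$ and $\tilde L^{\mathcal E}_d(y_k,y_{k+1},U^{(1)},U^{(2)},h)=h[\alpha\tilde L^{\mathcal E}(\bar y_k^\gamma,\Delta y_k,U^{(1)})+(1-\alpha)\tilde L^{\mathcal E}(\bar y_k^{1-\gamma},\Delta y_k,U^{(2)})]$, where $U^{(1)},U^{(2)}$ approximate the control at times $\beta t_k+(1-\beta)t_{k+1}$ and $(1-\beta)t_k+\beta t_{k+1}$. Discrete momenta: $p^-_{y,k}=-D_1L_d(y_k,y_{k+1},\dots)$, $p^+_{y,k+1}=D_2L_d(y_k,y_{k+1},\dots)$ for $L_d\in\{\tilde L_d,\tilde L^{\mathcal E}_d\}$; along solutions of the discrete Euler–Lagrange equations $D_2L_d(y_{k-1},y_k)+D_1L_d(y_k,y_{k+1})=0$ they coincide, $p_{y,k}:=p^-_{y,k}=p^+_{y,k}$, split as $p_{y,k}=(p_{q,k},p_{\lambda,k})$ in the $q$ and $\lambda$ components. *)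

(* Defs.v *)
(* Q = R^n is 'cV[R]_n (column
   vectors), controls live in 'cV[R]_m, R : realType. *)
From mathcomp Require Import all_boot all_order all_algebra.
From mathcomp Require Import all_classical all_reals all_analysis.
Set Implicit Arguments. Unset Strict Implicit. Unset Printing Implicit Defensive.
Import Order.TTheory GRing.Theory Num.Theory.
Local Open Scope ring_scope.

Definition dfun {R : realType} {V W : normedModType R} (f : V -> W) (x v : V) : W :=
  'd f x v.

(* C^k : C^0 = continuous; C^(k+1) = differentiable everywhere and the map
   (x,v) |-> Df(x)v is C^k (in finite dimensions this is the usual C^k). *)
Fixpoint Ck {R : realType} (k : nat) (V W : normedModType R) (f : V -> W) : Prop :=
  match k with
  | 0 => continuous f
  | k'.+1 => (forall x, differentiable f x) /\
      @Ck R k' (V * V)%type W (fun p : V * V => dfun f p.1 p.2)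
  end.

Definition smooth {R : realType} {V W : normedModType R} (f : V -> W) : Prop :=
  forall k, @Ck R k V W f.

Section Defs.
Context {R : realType}.

Definition dotv {n : nat} (u v : 'cV[R]_n) : R := (u^T *m v) ord0 ord0.

Definition invT {n : nat} (A : 'M[R]_n) : 'M[R]_n := (invmx A)^T.

Definition sym_posdef {m : nat} (M : 'M[R]_m) : Prop :=
  M^T = M /\ forall u : 'cV[R]_m, u != 0 -> 0 < dotv u (M *m u).

Definition grad {n : nat} (F : 'cV[R]_n -> R) (x : 'cV[R]_n) : 'cV[R]_n :=
  \col_i ('D_(delta_mx i ord0) F x).

Variables (n m : nat).
Implicit Types (f : 'cV[R]_n -> 'cV[R]_n -> 'cV[R]_n)
  (rho : 'cV[R]_n -> 'M[R]_(n, m)) (g : 'cV[R]_n -> 'M[R]_m).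

Definition bmat rho g (q : 'cV[R]_n) : 'M[R]_n :=
  rho q *m invmx (g q) *m (rho q)^T.

Definition LtE f rho g (q l v vl : 'cV[R]_n) (u : 'cV[R]_m) : R :=
  dotv vl v + dotv l (f q v + rho q *m u) - 2^-1 * dotv u (g q *m u).

Definition Lt f rho g (q l v vl : 'cV[R]_n) : R :=
  dotv vl v + dotv l (f q v) + 2^-1 * dotv l (bmat rho g q *m l).

Definition cvx {p : nat} (gam : R) (x x1 : 'cV[R]_p) : 'cV[R]_p :=
  gam *: x + (1 - gam) *: x1.

Definition dq {p : nat} (h : R) (x x1 : 'cV[R]_p) : 'cV[R]_p := h^-1 *: (x1 - x).

Definition Ltd f rho g (alpha gam h : R) (qk lk qk1 lk1 : 'cV[R]_n) : R :=
  h * alpha * Lt f rho g (cvx gam qk qk1) (cvx gam lk lk1) (dq h qk qk1) (dq h lk lk1)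
  + h * (1 - alpha) *
      Lt f rho g (cvx (1 - gam) qk qk1) (cvx (1 - gam) lk lk1) (dq h qk qk1) (dq h lk lk1).

Definition LtdE f rho g (alpha gam h : R) (qk lk qk1 lk1 : 'cV[R]_n)
  (U1 U2 : 'cV[R]_m) : R :=
  h * (alpha * LtE f rho g (cvx gam qk qk1) (cvx gam lk lk1) (dq h qk qk1) (dq h lk lk1) U1
       + (1 - alpha) *
         LtE f rho g (cvx (1 - gam) qk qk1) (cvx (1 - gam) lk lk1)
             (dq h qk qk1) (dq h lk lk1) U2).

End Defs.

Section Mechanics.
Context {R : realType} {n : nat}.
Local Notation L4 := ('cV[R]_n -> 'cV[R]_n -> 'cV[R]_n -> 'cV[R]_n -> R).

Definition D1q (L : L4) a b c d := grad (fun x => L x b c d) a.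
Definition D1l (L : L4) a b c d := grad (fun x => L a x c d) b.
Definition D2q (L : L4) a b c d := grad (fun x => L a b x d) c.
Definition D2l (L : L4) a b c d := grad (fun x => L a b c x) d.

(* discrete Euler-Lagrange equations at node k (0 < k), for the family of
   discrete Lagrangians Lk k on the segment [t_k, t_{k+1}]:
   D_2 L_d(y_{k-1}, y_k) + D_1 L_d(y_k, y_{k+1}) = 0 *)
Definition DEL (Lk : nat -> L4) (qs ls : nat -> 'cV[R]_n) (k : nat) : Prop :=
  D2q (Lk k.-1) (qs k.-1) (ls k.-1) (qs k) (ls k)
    + D1q (Lk k) (qs k) (ls k) (qs k.+1) (ls k.+1) = 0 /\
  D2l (Lk k.-1) (qs k.-1) (ls k.-1) (qs k) (ls k)
    + D1l (Lk k) (qs k) (ls k) (qs k.+1) (ls k.+1) = 0.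

(* discrete momenta p_{y,k} = p^-_{y,k} = -D_1 L_d(y_k, y_{k+1}) *)
Definition pq_k (Lk : nat -> L4) (qs ls : nat -> 'cV[R]_n) (k : nat) : 'cV[R]_n :=
  - D1q (Lk k) (qs k) (ls k) (qs k.+1) (ls k.+1).
Definition pl_k (Lk : nat -> L4) (qs ls : nat -> 'cV[R]_n) (k : nat) : 'cV[R]_n :=
  - D1l (Lk k) (qs k) (ls k) (qs k.+1) (ls k.+1).

Definition Inoether (B : 'M[R]_n) (d : 'cV[R]_n) (q l pq pl : 'cV[R]_n) : R :=
  dotv pq (B *m q + d) - dotv pl (B^T *m l).

Definition Id_k B d (Lk : nat -> L4) (qs ls : nat -> 'cV[R]_n) (k : nat) : R :=
  Inoether B d (qs k) (ls k) (pq_k Lk qs ls k) (pl_k Lk qs ls k).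

Definition conserved_along B d (Lk : nat -> L4) (qs ls : nat -> 'cV[R]_n) (N : nat) : Prop :=
  (forall k, (0 < k < N)%N -> DEL Lk qs ls k) ->
  forall k j, (0 < k < N)%N -> (0 < j < N)%N -> Id_k B d Lk qs ls k = Id_k B d Lk qs ls j.
End Mechanics.

(* Main.v *)
Require Import Defs.
From HB Require Import structures.
From mathcomp Require Import all_boot all_order all_algebra.
From mathcomp Require Import all_classical all_reals all_analysis.
From mathcomp Require Import lra.
Import Order.TTheory GRing.Theory Num.Theory.
Local Open Scope ring_scope.

Set Implicit Arguments. Unset Strict Implicit.

Section Tools.
Variable R : realType.

Section X.
Variable X : normedModType R.

Lemma d_dD (W : normedModType R) (F G : X -> W) x :
  differentiable F x -> differentiable G x -> differentiable (fun y => F y + G y) x.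
Proof. by move=> dF dG; exact: (differentiableD dF dG). Qed.

Lemma d_dB (W : normedModType R) (F G : X -> W) x :
  differentiable F x -> differentiable G x -> differentiable (fun y => F y - G y) x.
Proof. by move=> dF dG; exact: (differentiableB dF dG). Qed.

Lemma d_dN (W : normedModType R) (F : X -> W) x :
  differentiable F x -> differentiable (fun y => - F y) x.
Proof. by move=> dF; exact: (differentiableN dF). Qed.

Lemma d_dM (F G : X -> R) x :
  differentiable F x -> differentiable G x -> differentiable (fun y => F y * G y) x.
Proof. by move=> dF dG; exact: (differentiableM dF dG). Qed.

Lemma d_dZc (W : normedModType R) (F : X -> W) (k : R) x :
  differentiable F x -> differentiable (fun y => k *: F y) x.
Proof. by move=> dF; exact: (differentiableZ k dF). Qed.

Lemma d_dcst (W : normedModType R) (w : W) x : differentiable (fun _ : X => w) x.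
Proof. exact: differentiable_cst. Qed.

Lemma d_dcomp (V W : normedModType R) (F : X -> V) (G : V -> W) x :
  differentiable F x -> differentiable G (F x) -> differentiable (fun y => G (F y)) x.
Proof. by move=> dF dG; exact: (differentiable_comp dF dG). Qed.

Lemma d_dpair (V W : normedModType R) (F : X -> V) (G : X -> W) x :
  differentiable F x -> differentiable G x -> differentiable (fun y => (F y, G y)) x.
Proof. by move=> dF dG; exact: (differentiable_pair dF dG). Qed.

Lemma d_dsum (I : Type) (r : seq I) (P : pred I) (W : normedModType R)
  (G : I -> X -> W) x :
  (forall i, differentiable (G i) x) ->
  differentiable (fun y => \sum_(i <- r | P i) G i y) x.
Proof.
move=> H; elim: r => [|i r IH].
  rewrite (_ : (fun y => _) = fun _ => 0); first exact: d_dcst.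
  by apply: funext => y; rewrite big_nil.
rewrite (_ : (fun y => _) = fun y => (if P i then G i y else 0) +
   \sum_(j <- r | P j) G j y); last first.
  by apply: funext => y; rewrite big_cons; case: (P i); rewrite ?add0r.
apply: d_dD => //; case: (P i) => //; exact: d_dcst.
Qed.

Lemma d_dprod (I : Type) (r : seq I) (P : pred I) (G : I -> X -> R) x :
  (forall i, differentiable (G i) x) ->
  differentiable (fun y => \prod_(i <- r | P i) G i y) x.
Proof.
move=> H; elim: r => [|i r IH].
  rewrite (_ : (fun y => _) = fun _ => 1); first exact: d_dcst.
  by apply: funext => y; rewrite big_nil.
rewrite (_ : (fun y => _) = fun y => (if P i then G i y else 1) *
   \prod_(j <- r | P j) G j y); last first.
  by apply: funext => y; rewrite big_cons; case: (P i); rewrite ?mul1r.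
apply: d_dM => //; case: (P i) => //; exact: d_dcst.
Qed.

Lemma d_dentry a b (F : X -> 'M[R]_(a, b)) x i j :
  differentiable F x -> differentiable (fun y => F y i j) x.
Proof. by move=> dF; exact: (differentiable_comp dF (differentiable_coord _ i j)). Qed.

Lemma d_dmx a b (F : X -> 'M[R]_(a, b)) x :
  (forall i j, differentiable (fun y => F y i j) x) -> differentiable F x.
Proof.
move=> H.
rewrite (_ : F = fun y => \sum_(i < a) \sum_(j < b) F y i j *: delta_mx i j);
  last by apply: funext => y; exact: matrix_sum_delta.
apply: d_dsum => i; apply: d_dsum => j.
exact: (differentiableZl (delta_mx i j) (H i j)).
Qed.

Lemma d_dmul a b c (F : X -> 'M[R]_(a, b)) (G : X -> 'M[R]_(b, c)) x :
  differentiable F x -> differentiable G x ->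
  differentiable (fun y => F y *m G y) x.
Proof.
move=> dF dG; apply: d_dmx => i j.
rewrite (_ : (fun y => _) = fun y => \sum_k F y i k * G y k j);
  last by apply: funext => y; rewrite mxE.
by apply: d_dsum => k; apply: d_dM; apply: d_dentry.
Qed.

Lemma d_dtr a b (F : X -> 'M[R]_(a, b)) x :
  differentiable F x -> differentiable (fun y => (F y)^T) x.
Proof.
move=> dF; apply: d_dmx => i j.
rewrite (_ : (fun y => _) = fun y => F y j i);
  last by apply: funext => y; rewrite mxE.
exact: d_dentry.
Qed.

Lemma d_ddotv k (F G : X -> 'cV[R]_k) x :
  differentiable F x -> differentiable G x ->
  differentiable (fun y => dotv (F y) (G y)) x.
Proof. by move=> dF dG; apply: d_dentry; apply: d_dmul => //; apply: d_dtr. Qed.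

Lemma d_ddet k (F : X -> 'M[R]_k) x :
  (forall i j, differentiable (fun y => F y i j) x) ->
  differentiable (fun y => \det (F y)) x.
Proof.
move=> H; rewrite /determinant.
apply: d_dsum => s; apply: d_dM; first exact: d_dcst.
by apply: d_dprod => i; apply: H.
Qed.

Lemma d_dinvmx k (F : X -> 'M[R]_k) x :
  (forall y, F y \in unitmx) -> differentiable F x ->
  differentiable (fun y => invmx (F y)) x.
Proof.
move=> U dF; apply: d_dmx => i j.
rewrite (_ : (fun y => _) = fun y => (\det (F y))^-1 *
    ((-1) ^+ (j + i) * \det (row' j (col' i (F y))))); last first.
  by apply: funext => y; rewrite /invmx U !mxE.
apply: d_dM.
  apply: differentiableV; first by apply: d_ddet => a b; apply: d_dentry.
  by rewrite -unitfE -unitmxE.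
apply: d_dM; first exact: d_dcst.
apply: d_ddet => a b.
rewrite (_ : (fun y => _) = fun y => F y (lift j a) (lift i b));
  last by apply: funext => y; rewrite !mxE.
exact: d_dentry.
Qed.

End X.

Lemma d_dfst (U V : normedModType R) (p : U * V) :
  differentiable (fun q : U * V => q.1) p.
Proof.
have lin : linear (fun q : U * V => q.1) by [].
pose fM := GRing.isLinear.Build _ _ _ _ _ lin.
pose fL : {linear (U * V)%type -> U} := HB.pack (fun q : U * V => q.1) fM.
change (differentiable (fL : _ -> _) p).
apply: linear_differentiable => z; exact: cvg_fst.
Qed.

Lemma d_dsnd (U V : normedModType R) (p : U * V) :
  differentiable (fun q : U * V => q.2) p.
Proof.
have lin : linear (fun q : U * V => q.2) by [].
pose fM := GRing.isLinear.Build _ _ _ _ _ lin.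
pose fL : {linear (U * V)%type -> V} := HB.pack (fun q : U * V => q.2) fM.
change (differentiable (fL : _ -> _) p).
apply: linear_differentiable => z; exact: cvg_snd.
Qed.

End Tools.

Unset Implicit Arguments.

Section Noe.
Variable R : realType.
Variables (n m : nat).
Local Notation V := (matrix_matrix__canonical__normed_module_NormedModule R n 1).
Local Notation W := (matrix_matrix__canonical__normed_module_NormedModule R m 1).
Local Notation X6 := (((V * V) * (V * V)) * (W * W))%type.

Lemma dotv0 k (v : 'cV[R]_k) : dotv v 0 = 0.
Proof. by rewrite /dotv mulmx0 mxE. Qed.

Lemma fin6 (a b c d e f : R) : (0 : R -> R) 1 = a + b + c + d + e + f ->
  e = 0 -> f = 0 -> a + b + c + d = 0.
Proof. by move=> H e0 f0; rewrite e0 f0 !addr0 in H; rewrite -H. Qed.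

Lemma pairD (A B : zmodType) (a c : A) (b d : B) :
  ((a, b) + (c, d) : (A * B)%type) = (a + c, b + d).
Proof. by []. Qed.

Lemma pairZ (K : pzRingType) (A B : lmodType K) (k : K) (a : A) (b : B) :
  (k *: ((a, b) : (A * B)%type)) = (k *: a, k *: b).
Proof. by []. Qed.

Section Slots.
Variables V1 V2 V3 V4 V5 V6 : normedModType R.
Variable L : V1 -> V2 -> V3 -> V4 -> V5 -> V6 -> R.
Variables (x1 : V1) (x2 : V2) (x3 : V3) (x4 : V4) (x5 : V5) (x6 : V6).
Let FF := (fun p : (((V1 * V2) * (V3 * V4)) * (V5 * V6))%type =>
  L p.1.1.1 p.1.1.2 p.1.2.1 p.1.2.2 p.2.1 p.2.2).
Let xx := (((x1, x2), (x3, x4)), (x5, x6)).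

Lemma slot1 v (h : R) : FF (h *: (((v, 0), (0, 0)), (0, 0)) + xx) = L (h *: v + x1) x2 x3 x4 x5 x6.
Proof. by rewrite /FF /xx !pairZ !pairD /= !scaler0 !add0r. Qed.
Lemma slot2 v (h : R) : FF (h *: (((0, v), (0, 0)), (0, 0)) + xx) = L x1 (h *: v + x2) x3 x4 x5 x6.
Proof. by rewrite /FF /xx !pairZ !pairD /= !scaler0 !add0r. Qed.
Lemma slot3 v (h : R) : FF (h *: (((0, 0), (v, 0)), (0, 0)) + xx) = L x1 x2 (h *: v + x3) x4 x5 x6.
Proof. by rewrite /FF /xx !pairZ !pairD /= !scaler0 !add0r. Qed.
Lemma slot4 v (h : R) : FF (h *: (((0, 0), (0, v)), (0, 0)) + xx) = L x1 x2 x3 (h *: v + x4) x5 x6.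
Proof. by rewrite /FF /xx !pairZ !pairD /= !scaler0 !add0r. Qed.
Lemma slot5 v (h : R) : FF (h *: (((0, 0), (0, 0)), (v, 0)) + xx) = L x1 x2 x3 x4 (h *: v + x5) x6.
Proof. by rewrite /FF /xx !pairZ !pairD /= !scaler0 !add0r. Qed.
Lemma slot6 v (h : R) : FF (h *: (((0, 0), (0, 0)), (0, v)) + xx) = L x1 x2 x3 x4 x5 (h *: v + x6).
Proof. by rewrite /FF /xx !pairZ !pairD /= !scaler0 !add0r. Qed.

Lemma lin1 (a : R) b c : ((((a *: b + c, 0), (0, 0)), (0, 0)) : (((V1 * V2) * (V3 * V4)) * (V5 * V6))%type)
  = a *: (((b, 0), (0, 0)), (0, 0)) + (((c, 0), (0, 0)), (0, 0)).
Proof. by rewrite !pairZ !pairD !scaler0 !addr0. Qed.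
Lemma lin2 (a : R) b c : ((((0, a *: b + c), (0, 0)), (0, 0)) : (((V1 * V2) * (V3 * V4)) * (V5 * V6))%type)
  = a *: (((0, b), (0, 0)), (0, 0)) + (((0, c), (0, 0)), (0, 0)).
Proof. by rewrite !pairZ !pairD !scaler0 !addr0. Qed.
Lemma lin3 (a : R) b c : ((((0, 0), (a *: b + c, 0)), (0, 0)) : (((V1 * V2) * (V3 * V4)) * (V5 * V6))%type)
  = a *: (((0, 0), (b, 0)), (0, 0)) + (((0, 0), (c, 0)), (0, 0)).
Proof. by rewrite !pairZ !pairD !scaler0 !addr0. Qed.
Lemma lin4 (a : R) b c : ((((0, 0), (0, a *: b + c)), (0, 0)) : (((V1 * V2) * (V3 * V4)) * (V5 * V6))%type)
  = a *: (((0, 0), (0, b)), (0, 0)) + (((0, 0), (0, c)), (0, 0)).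
Proof. by rewrite !pairZ !pairD !scaler0 !addr0. Qed.
Lemma lin5 (a : R) b c : ((((0, 0), (0, 0)), (a *: b + c, 0)) : (((V1 * V2) * (V3 * V4)) * (V5 * V6))%type)
  = a *: (((0, 0), (0, 0)), (b, 0)) + (((0, 0), (0, 0)), (c, 0)).
Proof. by rewrite !pairZ !pairD !scaler0 !addr0. Qed.
Lemma lin6 (a : R) b c : ((((0, 0), (0, 0)), (0, a *: b + c)) : (((V1 * V2) * (V3 * V4)) * (V5 * V6))%type)
  = a *: (((0, 0), (0, 0)), (0, b)) + (((0, 0), (0, 0)), (0, c)).
Proof. by rewrite !pairZ !pairD !scaler0 !addr0. Qed.
End Slots.

Lemma split6 (V1 V2 V3 V4 V5 V6 : normedModType R)
  (F : (((V1 * V2) * (V3 * V4)) * (V5 * V6))%type -> R) x a b c d e f :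
  'd F x (((a, b), (c, d)), (e, f)) =
  'd F x (((a, 0), (0, 0)), (0, 0)) + 'd F x (((0, b), (0, 0)), (0, 0)) +
  'd F x (((0, 0), (c, 0)), (0, 0)) + 'd F x (((0, 0), (0, d)), (0, 0)) +
  'd F x (((0, 0), (0, 0)), (e, 0)) + 'd F x (((0, 0), (0, 0)), (0, f)).
Proof.
rewrite -!linearD; congr ('d F x _).
by rewrite !pairD !addr0 !add0r.
Qed.

Lemma Dpart (Y : normedModType R) (G : Y -> R) (F : X6 -> R) z (x : X6)
  (i : Y -> X6) v :
  (forall h : R, F (h *: i v + x) = G (h *: v + z)) -> F x = G z ->
  'D_v G z = 'D_(i v) F x.
Proof.
move=> H Hx; rewrite /derive.
rewrite (_ : (fun h : R => h^-1 *: (F (h *: i v + x) - F x)) =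
  (fun h : R => h^-1 *: (G (h *: v + z) - G z))) //.
by apply: funext => h; rewrite H Hx.
Qed.

Lemma lin_grad k (psi : 'cV[R]_k -> R) :
  (forall a b c, psi (a *: b + c) = a * psi b + psi c) ->
  forall v, psi v = dotv v (\col_j psi (delta_mx j ord0)).
Proof.
move=> H v.
have psi0 : psi 0 = 0.
  by have := H 1 0 0; rewrite scaler0 addr0 => e; lra.
have psiD : {morph psi : a b / a + b}.
  by move=> a b; rewrite -[a]scale1r H mul1r scale1r.
have psiZ : forall a b, psi (a *: b) = a * psi b.
  by move=> a b; rewrite -[a *: b]addr0 H psi0 addr0.
rewrite {1}[v]matrix_sum_delta (big_morph psi psiD psi0).
rewrite /dotv mxE; apply: eq_bigr => j _.
by rewrite big_ord1 psiZ !mxE.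
Qed.

Lemma test (a b : V) (c d : W) (h : R) : h *: (((a, b), (a, b)), (c, d)) + (((a, b), (a, b)), (c, d)) = (((h *: a + a, h *: b + b), (h *: a + a, h *: b + b)), (h *: c + c, h *: d + d)).
Proof. by []. Qed.


Lemma grad_part k (G : 'cV[R]_k -> R) (F : X6 -> R) (z : matrix_matrix__canonical__normed_module_NormedModule R k 1) (x : X6)
  (i : 'cV[R]_k -> X6) :
  differentiable F x ->
  (forall v (h : R), F (h *: i v + x) = G (h *: v + z)) -> F x = G z ->
  (forall a b c, i (a *: b + c) = a *: i b + i c) ->
  forall v, 'd F x (i v) = dotv v (grad G z).
Proof.
move=> dF HF Hx Hi v.
transitivity (dotv v (\col_j 'd F x (i (delta_mx j ord0)))).
  apply: (@lin_grad _ (fun v => 'd F x (i v))) => a b c.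
  by rewrite Hi linearP.
congr dotv; apply/matrixP => j l; rewrite !mxE.
by rewrite (Dpart _ _ _ _ _ i _ (HF _) Hx) deriveE.
Qed.

Lemma noether (L : V -> V -> V -> V -> W -> W -> R) q l q1 l1 u1 u2
  (g1 g2 g3 g4 : R -> V) (g5 g6 : R -> W) :
  differentiable (fun p : X6 => L p.1.1.1 p.1.1.2 p.1.2.1 p.1.2.2 p.2.1 p.2.2)
    (((q, l), (q1, l1)), (u1, u2)) ->
  differentiable g1 0 -> differentiable g2 0 -> differentiable g3 0 ->
  differentiable g4 0 -> differentiable g5 0 -> differentiable g6 0 ->
  g1 0 = q -> g2 0 = l -> g3 0 = q1 -> g4 0 = l1 -> g5 0 = u1 -> g6 0 = u2 ->
  (forall s, L (g1 s) (g2 s) (g3 s) (g4 s) (g5 s) (g6 s) = L q l q1 l1 u1 u2) ->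
  grad (fun U => L q l q1 l1 U u2) u1 = 0 ->
  grad (fun U => L q l q1 l1 u1 U) u2 = 0 ->
  dotv ('D_1 g1 0) (grad (fun a => L a l q1 l1 u1 u2) q)
  + dotv ('D_1 g2 0) (grad (fun a => L q a q1 l1 u1 u2) l)
  + dotv ('D_1 g3 0) (grad (fun a => L q l a l1 u1 u2) q1)
  + dotv ('D_1 g4 0) (grad (fun a => L q l q1 a u1 u2) l1) = 0.
Proof.
move=> dF d1 d2 d3 d4 d5 d6 e1 e2 e3 e4 e5 e6 inv gu1 gu2.
set F := (fun p : X6 => _) in dF.
set x := (((q, l), (q1, l1)), (u1, u2)) in dF.
pose Ga := fun s => (((g1 s, g2 s), (g3 s, g4 s)), (g5 s, g6 s)).
have dGa : differentiable Ga 0.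
  by rewrite /Ga; apply: d_dpair; [apply: d_dpair; apply: d_dpair|apply: d_dpair].

have Ga0 : Ga 0 = x by rewrite /Ga e1 e2 e3 e4 e5 e6.
have dF' : differentiable F (Ga 0) by rewrite Ga0.
have := diff_comp dGa dF'.
have -> : F \o Ga = cst (F x).
  by apply: funext => s; rewrite /F /Ga /= inv.
rewrite diff_cst Ga0 => /(congr1 (fun phi : R -> R => phi 1)) /=.
have dGa1 : 'd Ga 0 1 = ((('d g1 0 1, 'd g2 0 1), ('d g3 0 1, 'd g4 0 1)), ('d g5 0 1, 'd g6 0 1)).
  have H1 := differentiableP d1. have H2 := differentiableP d2.
  have H3 := differentiableP d3. have H4 := differentiableP d4.
  have H5 := differentiableP d5. have H6 := differentiableP d6.
  have := is_diff_pair (is_diff_pair (is_diff_pair H1 H2) (is_diff_pair H3 H4)) (is_diff_pair H5 H6).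
    move=> Hd.  rewrite /Ga diff_val.  done.
rewrite dGa1 => H.
rewrite split6 in H.
rewrite (grad_part _ (fun a => L a l q1 l1 u1 u2) _ q _ _ dF (@slot1 _ _ _ _ _ _ L q l q1 l1 u1 u2) (erefl _) (@lin1 _ _ _ _ _ _)) in H.
rewrite (grad_part _ (fun a => L q a q1 l1 u1 u2) _ l _ _ dF (@slot2 _ _ _ _ _ _ L q l q1 l1 u1 u2) (erefl _) (@lin2 _ _ _ _ _ _)) in H.
rewrite (grad_part _ (fun a => L q l a l1 u1 u2) _ q1 _ _ dF (@slot3 _ _ _ _ _ _ L q l q1 l1 u1 u2) (erefl _) (@lin3 _ _ _ _ _ _)) in H.
rewrite (grad_part _ (fun a => L q l q1 a u1 u2) _ l1 _ _ dF (@slot4 _ _ _ _ _ _ L q l q1 l1 u1 u2) (erefl _) (@lin4 _ _ _ _ _ _)) in H.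
rewrite (grad_part _ (fun a => L q l q1 l1 a u2) _ u1 _ _ dF (@slot5 _ _ _ _ _ _ L q l q1 l1 u1 u2) (erefl _) (@lin5 _ _ _ _ _ _)) in H.
rewrite (grad_part _ (fun a => L q l q1 l1 u1 a) _ u2 _ _ dF (@slot6 _ _ _ _ _ _ L q l q1 l1 u1 u2) (erefl _) (@lin6 _ _ _ _ _ _)) in H.
rewrite gu1 gu2 in H.
rewrite (deriveE _ d1) (deriveE _ d2) (deriveE _ d3) (deriveE _ d4).
exact: (fin6 _ _ _ _ _ _ H (dotv0 _ _) (dotv0 _ _)).
Qed.

End Noe.

Unset Implicit Arguments.

Section Alg.
Variable R : realType.

Lemma dotvC k (u v : 'cV[R]_k) : dotv u v = dotv v u.
Proof. by rewrite /dotv !mxE; apply: eq_bigr => i _; rewrite !mxE mulrC. Qed.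

Lemma dotvNl k (u v : 'cV[R]_k) : dotv (- u) v = - dotv u v.
Proof. by rewrite /dotv linearN /= mulNmx mxE. Qed.

Lemma dotvNr k (u v : 'cV[R]_k) : dotv u (- v) = - dotv u v.
Proof. by rewrite /dotv mulmxN mxE. Qed.

Lemma conserve n (B : 'M[R]_n) d (Lk : nat -> 'cV[R]_n -> 'cV[R]_n -> 'cV[R]_n -> 'cV[R]_n -> R)
  qs ls N :
  (forall k, (0 < k)%N -> (k.+1 < N)%N ->
    dotv (B *m qs k + d) (D1q (Lk k) (qs k) (ls k) (qs k.+1) (ls k.+1))
  + dotv (- (B^T *m ls k)) (D1l (Lk k) (qs k) (ls k) (qs k.+1) (ls k.+1))
  + dotv (B *m qs k.+1 + d) (D2q (Lk k) (qs k) (ls k) (qs k.+1) (ls k.+1))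
  + dotv (- (B^T *m ls k.+1)) (D2l (Lk k) (qs k) (ls k) (qs k.+1) (ls k.+1)) = 0) ->
  conserved_along B d Lk qs ls N.
Proof.
move=> Hn Hdel.
have step : forall k, (0 < k)%N -> (k.+1 < N)%N ->
    Id_k B d Lk qs ls k = Id_k B d Lk qs ls k.+1.
  move=> k k0 kN.
  have [E1 E2] : DEL Lk qs ls k.+1 by apply: Hdel; rewrite ltn0Sn.
  move: E1 E2; rewrite /= => /eqP; rewrite addr_eq0 => /eqP E1 /eqP; rewrite addr_eq0 => /eqP E2.
  have := Hn k k0 kN; rewrite E1 E2.
  rewrite /Id_k /Inoether /pq_k /pl_k !dotvNl !dotvNr.
  rewrite (dotvC _ (D1q _ _ _ _ _)) (dotvC _ (D1l _ _ _ _ _)).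
  rewrite (dotvC _ (D1q _ _ _ _ _)) (dotvC _ (D1l _ _ _ _ _)).
  move=> H; lra.
have base : forall k, (0 < k)%N -> (k < N)%N ->
    Id_k B d Lk qs ls k = Id_k B d Lk qs ls 1.
  elim=> [//|k IH] _ kN.
  case: k IH kN => [//|k] IH kN.
  rewrite -step //; apply: IH => //; exact: ltnW.
move=> k j /andP[k0 kN] /andP[j0 jN].
by rewrite base // [RHS]base.
Qed.

End Alg.

Set Implicit Arguments. Unset Strict Implicit.

Section DL.
Variable R : realType.
Variables (n m : nat).
Variable f : 'cV[R]_n -> 'cV[R]_n -> 'cV[R]_n.
Variable rho : 'cV[R]_n -> 'M[R]_(n, m).
Variable g : 'cV[R]_n -> 'M[R]_m.
Hypothesis hf : forall p, differentiable (fun p : 'cV[R]_n * 'cV[R]_n => f p.1 p.2) p.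
Hypothesis hrho : forall q, differentiable rho q.
Hypothesis hg : forall q, differentiable g q.
Hypothesis hgu : forall q, g q \in unitmx.

Section X.
Variable X : normedModType R.
Variable x : X.

Lemma d_cvx k (gam : R) (P P1 : X -> 'cV[R]_k) :
  differentiable P x -> differentiable P1 x ->
  differentiable (fun y => cvx gam (P y) (P1 y)) x.
Proof. by move=> dP dP1; rewrite /cvx; apply: d_dD; apply: d_dZc. Qed.

Lemma d_dq k (h : R) (P P1 : X -> 'cV[R]_k) :
  differentiable P x -> differentiable P1 x ->
  differentiable (fun y => dq h (P y) (P1 y)) x.
Proof. by move=> dP dP1; rewrite /dq; apply: d_dZc; apply: d_dB. Qed.

Lemma d_f (Q V : X -> 'cV[R]_n) :
  differentiable Q x -> differentiable V x ->
  differentiable (fun y => f (Q y) (V y)) x.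
Proof.
move=> dQ dV.
exact: (d_dcomp (F := fun y => (Q y, V y)) (G := fun p => f p.1 p.2) (d_dpair dQ dV) (hf _)).
Qed.

Lemma d_Lt (Q L V VL : X -> 'cV[R]_n) :
  differentiable Q x -> differentiable L x -> differentiable V x ->
  differentiable VL x ->
  differentiable (fun y => Lt f rho g (Q y) (L y) (V y) (VL y)) x.
Proof.
move=> dQ dL dV dVL; rewrite /Lt /bmat.
apply: d_dD; first apply: d_dD.
- exact: d_ddotv.
- by apply: d_ddotv => //; apply: d_f.
apply: d_dM; first exact: d_dcst.
apply: d_ddotv => //; apply: d_dmul => //; apply: d_dmul.
  apply: d_dmul; first exact: (d_dcomp dQ (hrho _)).
  apply: d_dinvmx => //; exact: (d_dcomp dQ (hg _)).
by apply: d_dtr; exact: (d_dcomp dQ (hrho _)).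
Qed.

Lemma d_LtE (Q L V VL : X -> 'cV[R]_n) (U : X -> 'cV[R]_m) :
  differentiable Q x -> differentiable L x -> differentiable V x ->
  differentiable VL x -> differentiable U x ->
  differentiable (fun y => LtE f rho g (Q y) (L y) (V y) (VL y) (U y)) x.
Proof.
move=> dQ dL dV dVL dU; rewrite /LtE.
apply: d_dB; first apply: d_dD.
- exact: d_ddotv.
- apply: d_ddotv => //; apply: d_dD; first exact: d_f.
  by apply: d_dmul => //; exact: (d_dcomp dQ (hrho _)).
apply: d_dM; first exact: d_dcst.
apply: d_ddotv => //; apply: d_dmul => //; exact: (d_dcomp dQ (hg _)).
Qed.

Lemma d_Ltd alpha gam h (QK LK QK1 LK1 : X -> 'cV[R]_n) :
  differentiable QK x -> differentiable LK x -> differentiable QK1 x ->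
  differentiable LK1 x ->
  differentiable (fun y => Ltd f rho g alpha gam h (QK y) (LK y) (QK1 y) (LK1 y)) x.
Proof.
move=> d1 d2 d3 d4; rewrite /Ltd.
apply: d_dD; (apply: d_dM; first exact: d_dcst);
  by apply: d_Lt; (apply: d_cvx || apply: d_dq).
Qed.

Lemma d_LtdE alpha gam h (QK LK QK1 LK1 : X -> 'cV[R]_n) (U1 U2 : X -> 'cV[R]_m) :
  differentiable QK x -> differentiable LK x -> differentiable QK1 x ->
  differentiable LK1 x -> differentiable U1 x -> differentiable U2 x ->
  differentiable (fun y => LtdE f rho g alpha gam h (QK y) (LK y) (QK1 y) (LK1 y) (U1 y) (U2 y)) x.
Proof.
move=> d1 d2 d3 d4 d5 d6; rewrite /LtdE.
apply: d_dM; first exact: d_dcst.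
apply: d_dD; (apply: d_dM; first exact: d_dcst);
  by apply: d_LtE => //; (apply: d_cvx || apply: d_dq).
Qed.

End X.
End DL.

Section Proj.
Variable R : realType.
Variables A B C D E F : normedModType R.
Local Notation T := (((A * B) * (C * D)) * (E * F))%type.

Lemma dp111 x : differentiable (fun p : T => p.1.1.1) x.
Proof.
apply: (d_dcomp (F := fun p : T => p.1.1) (G := fun q => q.1)); last exact: d_dfst.
apply: (d_dcomp (F := fun p : T => p.1) (G := fun q => q.1)); exact: d_dfst.
Qed.
Lemma dp112 x : differentiable (fun p : T => p.1.1.2) x.
Proof.
apply: (d_dcomp (F := fun p : T => p.1.1) (G := fun q => q.2)); last exact: d_dsnd.
apply: (d_dcomp (F := fun p : T => p.1) (G := fun q => q.1)); exact: d_dfst.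
Qed.
Lemma dp121 x : differentiable (fun p : T => p.1.2.1) x.
Proof.
apply: (d_dcomp (F := fun p : T => p.1.2) (G := fun q => q.1)); last exact: d_dfst.
apply: (d_dcomp (F := fun p : T => p.1) (G := fun q => q.2)); [exact: d_dfst|exact: d_dsnd].
Qed.
Lemma dp122 x : differentiable (fun p : T => p.1.2.2) x.
Proof.
apply: (d_dcomp (F := fun p : T => p.1.2) (G := fun q => q.2)); last exact: d_dsnd.
apply: (d_dcomp (F := fun p : T => p.1) (G := fun q => q.2)); [exact: d_dfst|exact: d_dsnd].
Qed.
Lemma dp21 x : differentiable (fun p : T => p.2.1) x.
Proof. apply: (d_dcomp (F := fun p : T => p.2) (G := fun q => q.1)); [exact: d_dsnd|exact: d_dfst]. Qed.
Lemma dp22 x : differentiable (fun p : T => p.2.2) x.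
Proof. apply: (d_dcomp (F := fun p : T => p.2) (G := fun q => q.2)); exact: d_dsnd. Qed.
End Proj.

Set Implicit Arguments. Unset Strict Implicit.

Section Alg2.
Variable R : realType.

Lemma cvx_aff n (gam : R) (M : 'M[R]_n) (c x y : 'cV[R]_n) :
  cvx gam (M *m x + c) (M *m y + c) = M *m cvx gam x y + c.
Proof.
rewrite /cvx !scalerDr mulmxDr !scalemxAr addrACA -scalerDl.
by rewrite [gam + _]addrC subrK scale1r.
Qed.

Lemma cvx_lin n (gam : R) (M : 'M[R]_n) (x y : 'cV[R]_n) :
  cvx gam (M *m x) (M *m y) = M *m cvx gam x y.
Proof. by have := cvx_aff gam M 0 x y; rewrite !addr0. Qed.

Lemma dq_aff n (h : R) (M : 'M[R]_n) (c x y : 'cV[R]_n) :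
  dq h (M *m x + c) (M *m y + c) = M *m dq h x y.
Proof. by rewrite /dq opprD addrACA subrr addr0 -mulmxBr scalemxAr. Qed.

Lemma dq_lin n (h : R) (M : 'M[R]_n) (x y : 'cV[R]_n) :
  dq h (M *m x) (M *m y) = M *m dq h x y.
Proof. by have := dq_aff h M 0 x y; rewrite !addr0. Qed.

Lemma posdef_unit m (M : 'M[R]_m) : sym_posdef M -> M \in unitmx.
Proof.
case=> Msym Mpos; rewrite -row_free_unit -kermx_eq0.
apply/negPn/negP => K0.
have [i Hi] : exists i, row i (kermx M) != 0.
  case: (pickP (fun i => row i (kermx M) != 0)) => [i Hi|H]; first by exists i.
  case/negP: K0; apply/eqP/row_matrixP => j.
  by rewrite row0; move: (H j) => /negbFE/eqP.
set u := (row i (kermx M))^T.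
have u0 : u != 0 by rewrite /u -trmx0 (inj_eq trmx_inj).
have Mu : M *m u = 0.
  by rewrite /u -{1}Msym -trmx_mul -row_mul mulmx_ker row0 trmx0.
by have := Mpos u u0; rewrite Mu /dotv mulmx0 mxE ltxx.
Qed.

End Alg2.

Set Implicit Arguments. Unset Strict Implicit.

Section D.
Variable R : realType.

Lemma dder (W : normedModType R) (F : R -> W) t : differentiable F t -> derivable F t 1.
Proof. by move=> H; apply: diff_derivable. Qed.

Lemma D_mulc a b c (M : R -> 'M[R]_(a, b)) (v : 'M[R]_(b, c)) t :
  differentiable M t -> 'D_1 (fun s => M s *m v) t = 'D_1 M t *m v.
Proof.
move=> dM.
have dMv : differentiable (fun s => M s *m v) t by apply: d_dmul; [exact: dM|exact: d_dcst].
rewrite (derive_mx (dder dMv)) (derive_mx (dder dM)).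
apply/matrixP => i j; rewrite !mxE.
under eq_bigr do rewrite mxE.
rewrite (_ : (fun s => (M s *m v) i j) = \sum_k (fun s => v k j *: M s i k)); last first.
  by rewrite fct_sumE; apply: funext => s; rewrite mxE; apply: eq_bigr => k _; rewrite mulrC.
rewrite derive_sum; last first.
  move=> k; apply: dder; apply: d_dZc; exact: d_dentry.
apply: eq_bigr => k _.
rewrite deriveZ; first by rewrite mulrC.
apply: dder; exact: d_dentry.
Qed.


Lemma d_opp t : differentiable (fun s : R => - s) t.
Proof.
have did : differentiable (fun s : R => s) t.
  exact: (@ex_diff _ _ _ _ _ _ _ (is_diff_id t)).
exact: (d_dN did).
Qed.

Lemma d_neg (W : normedModType R) (M : R -> W) t :
  (forall s, differentiable M s) -> differentiable (fun s => M (- s)) t.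
Proof. by move=> dM; apply: (d_dcomp (F := fun s : R => - s)); [exact: d_opp|exact: dM]. Qed.

Lemma D_tr a b (M : R -> 'M[R]_(a, b)) t :
  differentiable M t -> 'D_1 (fun s => (M s)^T) t = ('D_1 M t)^T.
Proof.
move=> dM.
have dMt : differentiable (fun s => (M s)^T) t by exact: d_dtr.
rewrite (derive_mx (dder dMt)) (derive_mx (dder dM)).
apply/matrixP => i j; rewrite !mxE.
rewrite (_ : (fun s => (M s)^T i j) = (fun s => M s j i)); first by [].
by apply: funext => s; rewrite mxE.
Qed.

Lemma D_add (W : normedModType R) (P Q : R -> W) t :
  differentiable P t -> differentiable Q t ->
  'D_1 (fun s => P s + Q s) t = 'D_1 P t + 'D_1 Q t.
Proof.
move=> dP dQ.
rewrite (_ : (fun s => P s + Q s) = P + Q); last by [].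
by rewrite deriveD; [|exact: diff_derivable|exact: diff_derivable].
Qed.

Lemma D_neg (W : normedModType R) (M : R -> W) :
  differentiable M 0 -> 'D_1 (fun s => M (- s)) 0 = - 'D_1 M 0.
Proof.
move=> dM.
transitivity ('D_(-1) M 0).
  rewrite /derive; congr lim.
  f_equal; apply: funext => h /=.
  by rewrite oppr0 !addr0 scalerN.
by rewrite (deriveE _ dM) (deriveE _ dM) linearN.
Qed.
End D.

Unset Implicit Arguments.

Section FX.
Variable R : realType.
Variables (n m : nat).
Local Notation V := (matrix_matrix__canonical__normed_module_NormedModule R n 1).
Local Notation W := (matrix_matrix__canonical__normed_module_NormedModule R m 1).
Local Notation X6 := (((V * V) * (V * V)) * (W * W))%type.
Variable f : 'cV[R]_n -> 'cV[R]_n -> 'cV[R]_n.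
Variable rho : 'cV[R]_n -> 'M[R]_(n, m).
Variable g : 'cV[R]_n -> 'M[R]_m.
Hypothesis hf : forall p, differentiable (fun p : 'cV[R]_n * 'cV[R]_n => f p.1 p.2) p.
Hypothesis hrho : forall q, differentiable rho q.
Hypothesis hg : forall q, differentiable g q.
Hypothesis hgu : forall q, g q \in unitmx.

Lemma dF_Ltd alpha gam h (q l q1 l1 : V) (u1 u2 : W) :
  differentiable (fun p : X6 =>
    (fun a b c d (_ _ : W) => Ltd f rho g alpha gam h a b c d)
      p.1.1.1 p.1.1.2 p.1.2.1 p.1.2.2 p.2.1 p.2.2) (((q, l), (q1, l1)), (u1, u2)).
Proof.
exact: (d_Ltd hf hrho hg hgu alpha gam h (dp111 _) (dp112 _) (dp121 _) (dp122 _)).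
Qed.

Lemma dF_LtdE alpha gam h (q l q1 l1 : V) (u1 u2 : W) :
  differentiable (fun p : X6 =>
    (fun a b c d u1 u2 => LtdE f rho g alpha gam h a b c d u1 u2)
      p.1.1.1 p.1.1.2 p.1.2.1 p.1.2.2 p.2.1 p.2.2) (((q, l), (q1, l1)), (u1, u2)).
Proof.
exact: (d_LtdE hf hrho hg alpha gam h (dp111 _) (dp112 _) (dp121 _) (dp122 _)
  (dp21 _) (dp22 _)).
Qed.
End FX.

Unset Implicit Arguments.

Theorem mainTheorem13 (R : realType) (n m : nat)
  (f : 'cV[R]_n -> 'cV[R]_n -> 'cV[R]_n) (rho : 'cV[R]_n -> 'M[R]_(n, m))
  (g : 'cV[R]_n -> 'M[R]_m)
  (A : R -> 'M[R]_n) (c : R -> 'cV[R]_n) (Psi : R -> 'cV[R]_n -> 'M[R]_m)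
  (h : R) :
  (* standing assumptions *)
  smooth (fun p : 'cV[R]_n * 'cV[R]_n => f p.1 p.2) ->
  smooth rho -> smooth g ->
  (forall q, injective (fun u : 'cV[R]_m => rho q *m u)) ->
  (forall q, sym_posdef (g q)) ->
  0 < h ->
  (* one-parameter group of affine transformations q |-> A_s q + c_s *)
  smooth (A : R^o -> 'M[R]_n) -> smooth (c : R^o -> 'cV[R]_n) ->
  (forall s, A s \in unitmx) -> A 0 = 1%:M -> c 0 = 0 ->
  (forall s t, A (s + t) = A s *m A t /\ c (s + t) = A s *m c t + c s) ->
  (* control action *)
  (forall q, smooth (fun s : R^o => Psi s q)) ->
  (forall s q, rho (A s *m q + c s) *m Psi s q = A s *m rho q) ->
  let B := derive1 A 0 in
  let d := derive1 c 0 in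
  (* (i) control-independent case *)
  ((forall s q l v vl,
      Lt f rho g (A s *m q + c s) (invT (A s) *m l) (A s *m v) (invT (A s) *m vl)
      = Lt f rho g q l v vl) ->
   forall alpha gam, 0 <= alpha <= 1 -> 0 <= gam <= 1 ->
     (forall s qk lk qk1 lk1,
        Ltd f rho g alpha gam h (A s *m qk + c s) (invT (A s) *m lk)
            (A s *m qk1 + c s) (invT (A s) *m lk1)
        = Ltd f rho g alpha gam h qk lk qk1 lk1)
     /\
     (forall (N : nat) (qs ls : nat -> 'cV[R]_n),
        conserved_along B d (fun _ : nat => Ltd f rho g alpha gam h) qs ls N))
  /\
  (* (ii) control-dependent case *)
  ((forall s q l v vl u,
      LtE f rho g (A s *m q + c s) (invT (A s) *m l) (A s *m v) (invT (A s) *m vl)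
          (Psi s q *m u)
      = LtE f rho g q l v vl u) ->
   forall alpha beta gam, 0 <= alpha <= 1 -> 0 <= beta <= 1 -> 0 <= gam <= 1 ->
   ((exists E : R -> 'M[R]_m, forall s q, Psi s q = E s) \/ beta = gam) ->
     (forall s qk lk qk1 lk1 U1 U2,
        LtdE f rho g alpha gam h (A s *m qk + c s) (invT (A s) *m lk)
            (A s *m qk1 + c s) (invT (A s) *m lk1)
            (Psi s (cvx beta qk qk1) *m U1) (Psi s (cvx (1 - beta) qk qk1) *m U2)
        = LtdE f rho g alpha gam h qk lk qk1 lk1 U1 U2)
     /\
     (forall (N : nat) (qs ls : nat -> 'cV[R]_n) (U1s U2s : nat -> 'cV[R]_m),
        (* discrete minimisation conditions D_{U1} L^E_{d,k} = D_{U2} L^E_{d,k} = 0 *)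
        (forall k, (k < N)%N ->
           grad (fun U => LtdE f rho g alpha gam h (qs k) (ls k) (qs k.+1) (ls k.+1)
                                U (U2s k)) (U1s k) = 0 /\
           grad (fun U => LtdE f rho g alpha gam h (qs k) (ls k) (qs k.+1) (ls k.+1)
                                (U1s k) U) (U2s k) = 0) ->
        conserved_along B d
          (fun k => fun a b c' d' => LtdE f rho g alpha gam h a b c' d' (U1s k) (U2s k))
          qs ls N)).
Proof.
move=> sf srho sg rinj gpd hpos sA sc Aunit A0 c0 grp sPsi rhoPsi B d.
have hf : forall p, differentiable (fun p : 'cV[R]_n * 'cV[R]_n => f p.1 p.2) p := (sf 1%N).1.
have hrho : forall q, differentiable rho q := (srho 1%N).1.
have hg : forall q, differentiable g q := (sg 1%N).1.
have hgu : forall q, g q \in unitmx := fun q => posdef_unit (gpd q).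
have dA : forall s, differentiable A s := (sA 1%N).1.
have dc : forall s, differentiable c s := (sc 1%N).1.
have dPsi : forall q s, differentiable (fun s => Psi s q) s := fun q => (sPsi q 1%N).1.
have Ainv : forall s, invT (A s) = (A (- s))^T.
  move=> s; rewrite /invT; congr trmx.
  have E : A s *m A (- s) = 1%:M by rewrite -(grp s (- s)).1 subrr A0.
  by rewrite -[invmx (A s)]mulmx1 -E mulmxA mulVmx ?mul1mx.
have Psi0 : forall (q : 'cV[R]_n) (u : 'cV[R]_m), Psi 0 q *m u = u.
  move=> q u; apply: (@rinj q); rewrite /= mulmxA.
  have E := rhoPsi 0 q; rewrite A0 c0 !mul1mx addr0 in E; by rewrite E.
have BD : B = 'D_1 A 0 by rewrite /B derive1E.
have dD : d = 'D_1 c 0 by rewrite /d derive1E.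
have dg1 : forall q : 'cV[R]_n, differentiable (fun s => A s *m q + c s) 0.
  move=> q; apply: d_dD; last exact: dc.
  apply: d_dmul; [exact: dA|exact: d_dcst].
have dAn : differentiable (fun s => (A (- s))^T) 0.
  by apply: d_dtr; apply: d_neg.
have dg2 : forall l : 'cV[R]_n, differentiable (fun s => (A (- s))^T *m l) 0.
  by move=> l; apply: d_dmul; [exact: dAn|exact: d_dcst].
have G1 : forall q : 'cV[R]_n, 'D_1 (fun s => A s *m q + c s) 0 = B *m q + d.
  move=> q; rewrite D_add; last exact: dc.
    by rewrite D_mulc ?BD ?dD; last exact: dA.
  apply: d_dmul; [exact: dA|exact: d_dcst].
have G2 : forall l : 'cV[R]_n, 'D_1 (fun s => (A (- s))^T *m l) 0 = - (B^T *m l).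
  move=> l; rewrite D_mulc; last exact: dAn.
  rewrite D_tr; last exact: d_neg.
  by rewrite D_neg ?BD ?linearN ?mulNmx //; exact: dA.
have e1 : forall q : 'cV[R]_n, A 0 *m q + c 0 = q.
  by move=> q; rewrite A0 c0 mul1mx addr0.
have e2 : forall l : 'cV[R]_n, (A (- 0))^T *m l = l.
  by move=> l; rewrite oppr0 A0 trmx1 mul1mx.
split.
  move=> HL alpha gam _ _.
  have inv : forall s qk lk qk1 lk1,
      Ltd f rho g alpha gam h (A s *m qk + c s) (invT (A s) *m lk)
            (A s *m qk1 + c s) (invT (A s) *m lk1)
        = Ltd f rho g alpha gam h qk lk qk1 lk1.
    by move=> s qk lk qk1 lk1; rewrite /Ltd !cvx_aff !cvx_lin !dq_aff !dq_lin !HL.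
  split; first exact: inv.
  move=> N qs ls; apply: conserve => k k0 kN.
  pose L := fun a b c d (_ _ : 'cV[R]_m) => Ltd f rho g alpha gam h a b c d.
  have inv' : forall s, L (A s *m qs k + c s) ((A (- s))^T *m ls k)
      (A s *m qs k.+1 + c s) ((A (- s))^T *m ls k.+1) 0 0 =
      L (qs k) (ls k) (qs k.+1) (ls k.+1) 0 0.
    by move=> s; rewrite /L -!Ainv inv.
  have gz : forall a b c d, grad (fun U : 'cV[R]_m => L a b c d U 0) 0 = 0.
    move=> a b c' d'; apply/matrixP => i j; rewrite !mxE; exact: derive_cst.
  have gz' : forall a b c d, grad (fun U : 'cV[R]_m => L a b c d 0 U) 0 = 0.
    move=> a b c' d'; apply/matrixP => i j; rewrite !mxE; exact: derive_cst.
  have dz : differentiable (fun _ : R => (0 : 'cV[R]_m)) 0 by exact: d_dcst.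
  have N0 := @noether R n m L (qs k) (ls k) (qs k.+1) (ls k.+1) 0 0
     (fun s => A s *m qs k + c s) (fun s => (A (- s))^T *m ls k)
     (fun s => A s *m qs k.+1 + c s) (fun s => (A (- s))^T *m ls k.+1)
     (fun _ => 0) (fun _ => 0)
     (@dF_Ltd R n m f rho g hf hrho hg hgu alpha gam h _ _ _ _ _ _)
     (dg1 _) (dg2 _) (dg1 _) (dg2 _) dz dz
     (e1 _) (e2 _) (e1 _) (e2 _) erefl erefl inv' (gz _ _ _ _) (gz' _ _ _ _).
    rewrite (G1 (qs k)) (G2 (ls k)) (G1 (qs k.+1)) (G2 (ls k.+1)) in N0.
    exact: N0.
move=> HL alpha beta gam _ _ _ Hcase.
have inv : forall s qk lk qk1 lk1 U1 U2,
    LtdE f rho g alpha gam h (A s *m qk + c s) (invT (A s) *m lk)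
        (A s *m qk1 + c s) (invT (A s) *m lk1)
        (Psi s (cvx beta qk qk1) *m U1) (Psi s (cvx (1 - beta) qk qk1) *m U2)
    = LtdE f rho g alpha gam h qk lk qk1 lk1 U1 U2.
  move=> s qk lk qk1 lk1 U1 U2.
  have [P1 P2] : (Psi s (cvx beta qk qk1) = Psi s (cvx gam qk qk1)) /\ (Psi s (cvx (1 - beta) qk qk1) = Psi s (cvx (1 - gam) qk qk1)).
    by case: Hcase => [[E HE]|->]; rewrite ?HE.
  by rewrite P1 P2 /LtdE !cvx_aff !cvx_lin !dq_aff !dq_lin !HL.
split; first exact: inv.
move=> N qs ls U1s U2s Hmin; apply: conserve => k k0 kN.
have [gu1 gu2] := Hmin k (ltnW kN).
pose L := fun a b c d u1 u2 => LtdE f rho g alpha gam h a b c d u1 u2.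
have inv' : forall s, L (A s *m qs k + c s) ((A (- s))^T *m ls k)
    (A s *m qs k.+1 + c s) ((A (- s))^T *m ls k.+1)
    (Psi s (cvx beta (qs k) (qs k.+1)) *m U1s k)
    (Psi s (cvx (1 - beta) (qs k) (qs k.+1)) *m U2s k) =
    L (qs k) (ls k) (qs k.+1) (ls k.+1) (U1s k) (U2s k).
  by move=> s; rewrite /L -!Ainv inv.
have d5 : forall (q : 'cV[R]_n) (u : 'cV[R]_m), differentiable (fun s => Psi s q *m u) 0.
  by move=> q u; apply: d_dmul; [exact: dPsi|exact: d_dcst].
have N0 := @noether R n m L (qs k) (ls k) (qs k.+1) (ls k.+1) (U1s k) (U2s k)
   (fun s => A s *m qs k + c s) (fun s => (A (- s))^T *m ls k)
   (fun s => A s *m qs k.+1 + c s) (fun s => (A (- s))^T *m ls k.+1)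
   (fun s => Psi s (cvx beta (qs k) (qs k.+1)) *m U1s k)
   (fun s => Psi s (cvx (1 - beta) (qs k) (qs k.+1)) *m U2s k)
   (@dF_LtdE R n m f rho g hf hrho hg alpha gam h _ _ _ _ _ _)
   (dg1 _) (dg2 _) (dg1 _) (dg2 _) (d5 _ _) (d5 _ _)
   (e1 _) (e2 _) (e1 _) (e2 _) (Psi0 _ _) (Psi0 _ _) inv' gu1 gu2.
rewrite (G1 (qs k)) (G2 (ls k)) (G1 (qs k.+1)) (G2 (ls k.+1)) in N0.
exact: N0.
Qed.
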